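(* Let $G$ be a finite non-abelian group. Then the non-centralizer graph $\Upsilon_G$ is regular if and only if $|\mathrm{Cent}(G)|=[G:Z(G)]$.
   Context: For a finite group $G$ and $x\in G$, $C_G(x)$ denotes the centralizer of $x$, $Z(G)$ the center, and $\mathrm{Cent}(G)=\{C_G(x)\mid x\in G\}$ the set of distinct centralizers of $G$. The non-centralizer graph $\Upsilon_G$ is the simple graph with vertex set $G$ in which two distinct vertices $x,y$ are adjacent if and only if $C_G(x)\neq C_G(y)$. A graph is regular if all its vertices have the same degree. *)

(* Defs.v *)
From mathcomp Require Import all_boot all_fingroup.
Set Implicit Arguments. Unset Strict Implicit. Unset Printing Implicit Defensive.
Local Open Scope group_scope.

Definition Cent (gT : finGroupType) (G : {set gT}) : {set {set gT}} :=
  [set 'C_G[x] | x in G].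

Definition ncadj (gT : finGroupType) (G : {set gT}) (x y : gT) : bool :=
  (x != y) && ('C_G[x] != 'C_G[y]).

Definition ncdeg (gT : finGroupType) (G : {set gT}) (x : gT) : nat :=
  #|[set y in G | ncadj G x y]|.

Definition nc_regular (gT : finGroupType) (G : {set gT}) : Prop :=
  forall x y, x \in G -> y \in G -> ncdeg G x = ncdeg G y.

(* Main.v *)
Require Import Defs.
From mathcomp Require Import all_boot all_fingroup all_solvable.
From mathcomp Require Import zify.
Set Implicit Arguments. Unset Strict Implicit.
Local Open Scope group_scope.

Definition Kc (gT : finGroupType) (G : {set gT}) (x : gT) : {set gT} :=
  [set y in G | 'C_G[y] == 'C_G[x]].

Lemma deg_K (gT : finGroupType) (G : {group gT}) x :
  x \in G -> (ncdeg G x + #|Kc G x| = #|G|)%N.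
Proof.
move=> xG; rewrite -(cardsID (Kc G x) G) addnC; congr (_ + _)%N.
  by apply: eq_card => y; rewrite !inE; case: (y \in G).
apply: eq_card => y; rewrite !inE /ncadj.
case: (y \in G) => //=; rewrite eq_sym andbC.
rewrite andbT eq_sym; case: eqP => //= Hc; apply/eqP => Exy; apply: Hc; by rewrite Exy.
Qed.

Lemma Zcent (gT : finGroupType) (G : {group gT}) z t :
  z \in 'Z(G) -> t \in G -> z \in 'C[t].
Proof.
move=> /setIP [_ /centP zC] tG; apply/cent1P; exact: zC.
Qed.

Lemma K_lb (gT : finGroupType) (G : {group gT}) x :
  x \in G -> (#|'Z(G)| <= #|Kc G x|)%N.
Proof.
move=> xG; rewrite -(card_lcoset _ x); apply: subset_leq_card.
apply/subsetP => y /lcosetP [z zZ ->].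
have zG : z \in G by apply: (subsetP (center_sub G)).
rewrite inE groupM //=; apply/eqP/setP => t; rewrite !in_setI.
case tG: (t \in G) => //=.
by rewrite cent1C [t \in 'C[x]]cent1C groupMr // (Zcent zZ).
Qed.

Lemma K1 (gT : finGroupType) (G : {group gT}) : Kc G 1 \subset 'Z(G).
Proof.
apply/subsetP => y; rewrite inE => /andP [yG /eqP Hy].
rewrite inE yG /=; apply/centP => t tG.
have : t \in 'C_G[y] by rewrite Hy cent11T setIT.
by rewrite inE => /andP [_ /cent1P].
Qed.

Lemma sumK (gT : finGroupType) (G : {group gT}) :
  #|G| = (\sum_(C in Cent G) #|[set y in G | 'C_G[y] == C]|)%N.
Proof.
rewrite -sum1_card (@partition_big_imset _ _ _ _ _ (fun y => 'C_G[y])) /=.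
apply: eq_bigr => C _; rewrite -sum1_card; apply: eq_bigl => y.
by rewrite inE.
Qed.

Lemma Cent_K (gT : finGroupType) (G : {group gT}) C :
  C \in Cent G -> exists2 x, x \in G & [set y in G | 'C_G[y] == C] = Kc G x.
Proof. by move=> /imsetP [x xG ->]; exists x. Qed.

Theorem corollary2p5 (gT : finGroupType) (G : {group gT}) :
  ~~ abelian G -> (nc_regular G <-> #|Cent G| = #|G : 'Z(G)|).
Proof.
move=> _.
have LG := Lagrange (center_sub G).
have Zpos : (0 < #|'Z(G)|)%N by apply: cardG_gt0.
split.
- move=> reg.
  have K1Z : #|Kc G 1| = #|'Z(G)|.
    apply/eqP; rewrite eqn_leq subset_leq_card ?K1 //.
    exact: K_lb.
  have Kall : forall x, x \in G -> #|Kc G x| = #|'Z(G)|.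
    move=> x xG; rewrite -K1Z; have := deg_K xG; have := deg_K (group1 G).
    rewrite (reg x 1 xG (group1 G)); by move=> h1 /eqP; rewrite -h1 eqn_add2l => /eqP.
  have : #|G| = (#|Cent G| * #|'Z(G)|)%N.
    rewrite sumK -sum_nat_const; apply: eq_bigr => C /Cent_K [x xG ->].
    exact: Kall.
  rewrite -LG => h; apply/eqP; rewrite -(eqn_pmul2r Zpos); apply/eqP; by rewrite -h mulnC.
- move=> HC.
  have Kall : forall x, x \in G -> #|Kc G x| = #|'Z(G)|.
    move=> x xG; apply/eqP; rewrite eqn_leq K_lb // andbT.
    have Hs := sumK G.
    have HG : #|G| = (\sum_(C in Cent G) #|'Z(G)|)%N.
      by rewrite sum_nat_const HC mulnC LG.
    have Cx : 'C_G[x] \in Cent G by apply: imset_f.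
    rewrite (bigD1 _ Cx) /= in Hs; rewrite (bigD1 _ Cx) /= in HG.
    set S1 := bigop _ _ _ in Hs.
    set S2 := bigop _ _ _ in HG.
    have H3 : (S2 <= S1)%N.
      apply: leq_sum => C /andP [/Cent_K [y yG ->] _]; exact: K_lb.
    have E : (#|[set y in G | 'C_G[y] == 'C_G[x]]| + S1 = #|'Z(G)| + S2)%N.
      by rewrite -Hs -HG.
    rewrite /Kc -(leq_add2r S1) E leq_add2l; exact: H3.
  move=> x y xG yG.
  have := deg_K xG; have := deg_K yG; rewrite !Kall //; lia.
Qed.
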